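(* Let $n\geq2$ and let $\mathbb{F}$ be a field. Then the reduct $\widetilde H_n(\mathbb{F})/\sim$ is isomorphic to $H_n(\mathbb{F})$.
   Context: Let $V=\mathbb{F}^{n+1}$ with dual $V^*$. $H_n(\mathbb{F})$ is the graph whose vertices are pairs $(x,X)$ with $x$ a point and $X$ a hyperplane of the projective space $\mathbb{P}(V)$ with $x\not\subset X$, where $(x,X)\perp(y,Y)$ iff $x\subset Y$ and $y\subset X$. $\widetilde H_n(\mathbb{F})$ is the graph with vertex set $\{v\otimes f\in V\otimes V^*: v\in V, f\in V^*, f(v)\neq0\}$ in which $v\otimes f\perp w\otimes g$ iff $f(w)=g(v)=0$. For a graph, $u\sim v$ iff $u,v$ have the same neighbourhood; the reduct $\Gamma/\sim$ has the $\sim$-classes as vertices, with adjacency inherited from representatives. *)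

(* Defs.v *)
From HB Require Import structures.
From mathcomp Require Import all_boot all_order all_algebra.
Set Implicit Arguments. Unset Strict Implicit. Unset Printing Implicit Defensive.
Import GRing.Theory.
Local Open Scope ring_scope.

Definition same_nbhd {T : Type} (adj : T -> T -> Prop) (u v : T) : Prop :=
  forall w, adj u w <-> adj v w.

Definition reduct_vert {T : Type} (adj : T -> T -> Prop) : Type :=
  {C : T -> Prop | exists u, C = same_nbhd adj u}.

Definition reduct_adj {T : Type} (adj : T -> T -> Prop)
  (C D : reduct_vert adj) : Prop :=
  exists u v, sval C u /\ sval D v /\ adj u v.

Definition graph_iso {T1 T2 : Type} (adj1 : T1 -> T1 -> Prop)
  (adj2 : T2 -> T2 -> Prop) : Prop :=
  exists f : T1 -> T2, bijective f /\ forall x y, adj1 x y <-> adj2 (f x) (f y).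

(* V = F^(n+1) as row vectors; subspaces of V are represented canonically by
   square matrices A with <<A>>%MS = A (mxalgebra), row space = subspace. *)

Section Hn.
Variables (F : fieldType) (n : nat).

Definition is_point (A : 'M[F]_(n.+1)) : bool :=
  (\rank A == 1)%N && (<<A>>%MS == A).

Definition is_hyperplane (A : 'M[F]_(n.+1)) : bool :=
  (\rank A == n)%N && (<<A>>%MS == A).

Definition H_vert : Type :=
  {p : 'M[F]_(n.+1) * 'M[F]_(n.+1) |
     [&& is_point p.1, is_hyperplane p.2 & ~~ (p.1 <= p.2)%MS]}.

Definition H_adj (u v : H_vert) : Prop :=
  ((sval u).1 <= (sval v).2)%MS /\ ((sval v).1 <= (sval u).2)%MS.

(* V* = F^(n+1) as row vectors with the pairing f(v) = sum_i f_i v_i;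
   V ⊗ V* is modelled as (n+1)x(n+1) matrices, v ⊗ f = (v_i f_j)_{i,j}. *)

Definition dual_pair (f v : 'rV[F]_(n.+1)) : F := \sum_i f 0 i * v 0 i.

Definition tens (v f : 'rV[F]_(n.+1)) : 'M[F]_(n.+1) :=
  \matrix_(i, j) (v 0 i * f 0 j).

Definition Ht_vert : Type :=
  {M : 'M[F]_(n.+1) | exists v f, M = tens v f /\ dual_pair f v != 0}.

Definition Ht_adj (a b : Ht_vert) : Prop :=
  exists v f w g, sval a = tens v f /\ sval b = tens w g /\
    dual_pair f w = 0 /\ dual_pair g v = 0.

End Hn.

(* Main.v *)
Require Import Defs.
From HB Require Import structures.
From mathcomp Require Import all_boot all_order all_algebra.
From mathcomp Require Import ring.
From Stdlib Require Import ClassicalEpsilon ProofIrrelevance FunctionalExtensionality PropExtensionality.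

Set Implicit Arguments. Unset Strict Implicit. Unset Printing Implicit Defensive.
Import GRing.Theory.

Section Aux.
Local Open Scope ring_scope.
Variables (F : fieldType) (n : nat).
Local Notation rV := 'rV[F]_(n.+1).
Local Notation dual := (@dual_pair F n).
Local Notation tens := (@tens F n).

Lemma dualE (f v : rV) : dual f v = (f *m v^T) 0 0.
Proof. by rewrite /dual_pair !mxE; apply: eq_bigr => i _; rewrite !mxE. Qed.

Lemma dualC (f v : rV) : dual f v = dual v f.
Proof. by rewrite /dual_pair; apply: eq_bigr => i _; rewrite mulrC. Qed.

Lemma dual_mx (f v : rV) : f *m v^T = (dual f v)%:M.
Proof. by rewrite dualE; apply: mx11_scalar. Qed.

Lemma dual0r (f : rV) : dual f 0 = 0.
Proof. by rewrite dualE trmx0 mulmx0 mxE. Qed.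

Lemma dual0l (f : rV) : dual 0 f = 0.
Proof. by rewrite dualC dual0r. Qed.

Lemma dualL (i : 'I_n.+1) (c : F) (z w : rV) :
  dual (delta_mx 0 i - c *: z) w = w 0 i - c * dual z w.
Proof.
rewrite dualE mulmxBl -scalemxAl -rowE !mxE dualE !mxE.
by congr (_ - _ * _); apply: eq_bigr => j _; rewrite !mxE.
Qed.

Lemma tensE (v f : rV) : tens v f = v^T *m f.
Proof. by apply/matrixP => i j; rewrite !mxE big_ord1 !mxE. Qed.

Lemma tens_mul (v f w g : rV) : tens v f *m tens w g = dual f w *: tens v g.
Proof.
rewrite !tensE mulmxA -(mulmxA v^T) dual_mx mul_mx_scalar.
by rewrite scalemxAl.
Qed.

Lemma nz_entry (v : rV) : v != 0 -> exists i, v 0 i != 0.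
Proof.
move=> /eqP nz; case: (pickP (fun i => v 0 i != 0)) => [i Hi | H]; first by exists i.
exfalso; apply: nz; apply/rowP => i; rewrite mxE.
by move/negbT: (H i); rewrite negbK => /eqP.
Qed.

Lemma tens_neq0 (v f : rV) : v != 0 -> f != 0 -> tens v f != 0.
Proof.
move=> /nz_entry [i Hi] /nz_entry [j Hj]; apply/eqP => /matrixP /(_ i j).
by rewrite !mxE => /eqP; rewrite mulf_eq0 (negbTE Hi) (negbTE Hj).
Qed.

Lemma dual_nz (f v : rV) : dual f v != 0 -> f != 0 /\ v != 0.
Proof.
move=> H; split; apply/eqP => E; move: H; by rewrite E ?dual0r ?dual0l eqxx.
Qed.

End Aux.

Section Main.
Local Open Scope ring_scope.
Variables (F : fieldType) (n : nat).
Local Notation T := (Ht_vert F n).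
Local Notation rV := 'rV[F]_(n.+1).
Local Notation dual := (@dual_pair F n).
Local Notation tens := (@tens F n).

Lemma Ht_adjE (a b : T) :
  Ht_adj a b <-> (sval a *m sval b = 0 /\ sval b *m sval a = 0).
Proof.
split.
- case=> v [f [w [g [Ea [Eb [h1 h2]]]]]].
  by rewrite Ea Eb !tens_mul h1 h2 !scale0r.
- case=> H1 H2; case: (svalP a) => v [f [Ea Ha]]; case: (svalP b) => w [g [Eb Hb]].
  case: (dual_nz Ha) => [fnz vnz]; case: (dual_nz Hb) => [gnz wnz].
  exists v, f, w, g; do 2!split => //.
  move: H1 H2; rewrite Ea Eb !tens_mul => /eqP H1 /eqP H2.
  move: H1 H2; rewrite !scaler_eq0 (negbTE (tens_neq0 vnz gnz)) (negbTE (tens_neq0 wnz fnz)) !orbF.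
  by move=> /eqP -> /eqP ->.
Qed.

Lemma adj_tens (a b : T) v f w g : sval a = tens v f -> sval b = tens w g ->
  v != 0 -> f != 0 -> w != 0 -> g != 0 ->
  Ht_adj a b <-> (dual f w = 0 /\ dual g v = 0).
Proof.
move=> Ea Eb vnz fnz wnz gnz; rewrite Ht_adjE Ea Eb !tens_mul; split.
- case=> /eqP H1 /eqP H2; move: H1 H2.
  rewrite !scaler_eq0 (negbTE (tens_neq0 vnz gnz)) (negbTE (tens_neq0 wnz fnz)) !orbF.
  by move=> /eqP -> /eqP ->.
- by case=> -> ->; rewrite !scale0r.
Qed.

Definition kpt (M : 'M[F]_n.+1) := (<<M^T>>)%MS.
Definition khp (M : 'M[F]_n.+1) := (<<kermx M^T>>)%MS.

Lemma rank_tens (v f : rV) : dual f v != 0 -> \rank (tens v f)^T = 1%N.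
Proof.
case/dual_nz => fnz vnz; rewrite mxrank_tr; apply/eqP; rewrite eqn_leq; apply/andP; split.
- rewrite tensE; exact: leq_trans (mxrankM_maxr _ _) (rank_leq_row f).
- by rewrite lt0n mxrank_eq0 tens_neq0.
Qed.

Lemma key_proof (a : T) : [&& is_point (kpt (sval a)), is_hyperplane (khp (sval a))
   & ~~ (kpt (sval a) <= khp (sval a))%MS].
Proof.
case: (svalP a) => v [f [Ea Ha]]; case: (dual_nz Ha) => [fnz vnz].
rewrite /is_point /is_hyperplane /kpt /khp !genmx_id !genmxE mxrank_ker Ea rank_tens //.
rewrite subn1 /= !eqxx /= sub_kermx -trmx_mul trmx_eq0 tens_mul scaler_eq0 negb_or Ha.
exact: tens_neq0.
Qed.

Definition key (a : T) : H_vert F n :=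
  exist _ (kpt (sval a), khp (sval a)) (key_proof a).

Lemma H_adj_key (a b : T) :
  H_adj (key a) (key b) <-> (sval a *m sval b = 0 /\ sval b *m sval a = 0).
Proof.
rewrite /H_adj /= /kpt /khp !genmxE !sub_kermx -!trmx_mul !trmx_eq0.
split => [[/eqP H1 /eqP H2] | [H1 H2]]; split => //; apply/eqP => //.
Qed.

Lemma adj_key (a b : T) : Ht_adj a b <-> H_adj (key a) (key b).
Proof. by rewrite Ht_adjE H_adj_key. Qed.


Lemma key_scale (a b : T) (k : F) : k != 0 -> sval b = k *: sval a -> key b = key a.
Proof.
move=> knz E; apply: val_inj => /=; rewrite /kpt /khp E linearZ /=.
congr pair; apply: eq_genmx; first exact: eqmx_scale.
apply/eqmxP; rewrite !sub_kermx -scalemxAr scaler_eq0 mulmx_ker eqxx orbT andbT.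
have := mulmx_ker (k *: (sval a)^T); rewrite -scalemxAr => /eqP.
by rewrite scaler_eq0 (negbTE knz).
Qed.

Lemma same_key (u u' : T) : same_nbhd (@Ht_adj F n) u u' -> key u = key u'.
Proof.
move=> S.
case: (svalP u) => v [f [Eu Hd]]; case: (dual_nz Hd) => [fnz vnz].
case: (svalP u') => v' [f' [Eu' Hd']]; case: (dual_nz Hd') => [fnz' vnz'].
set d := dual f v in Hd.
have mk : forall w g, dual g w != 0 -> {b : T | sval b = tens w g}.
  move=> w g H.
  by exists (exist _ (tens w g) (ex_intro _ w (ex_intro _ g (conj erefl H)))).
have step1 : forall w, dual f w = 0 -> dual f' w = 0.
  move=> w Hw; case: (eqVneq w 0) => [->|wnz]; first by rewrite dual0r.
  case: (nz_entry wnz) => i Hi.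
  set g := delta_mx 0 i - (v 0 i / d) *: f.
  have Hgw : dual g w = w 0 i by rewrite dualL Hw mulr0 subr0.
  have Hgv : dual g v = 0 by rewrite dualL -/d divfK // subrr.
  have gw : dual g w != 0 by rewrite Hgw.
  case: (dual_nz gw) => gnz _.
  case: (mk w g gw) => b Eb.
  have A1 : Ht_adj u b by apply/(adj_tens Eu Eb vnz fnz wnz gnz).
  by have := (S b).1 A1 => /(adj_tens Eu' Eb vnz' fnz' wnz gnz) [].
have step2 : forall g, dual g v = 0 -> dual g v' = 0.
  move=> g Hg; case: (eqVneq g 0) => [->|gnz]; first by rewrite dual0l.
  case: (nz_entry gnz) => i Hi.
  set w := delta_mx 0 i - (f 0 i / d) *: v.
  have Hfw : dual f w = 0 by rewrite dualC dualL dualC -/d divfK // subrr.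
  have Hgw : dual g w = g 0 i by rewrite dualC dualL dualC Hg mulr0 subr0.
  have gw : dual g w != 0 by rewrite Hgw.
  case: (dual_nz gw) => _ wnz.
  case: (mk w g gw) => b Eb.
  have A1 : Ht_adj u b by apply/(adj_tens Eu Eb vnz fnz wnz gnz).
  by have := (S b).1 A1 => /(adj_tens Eu' Eb vnz' fnz' wnz gnz) [].
have Ef' : f' = (dual v f' / d) *: f.
  apply/rowP => j; rewrite mxE.
  have := step1 (delta_mx 0 j - (f 0 j / d) *: v).
  rewrite dualC dualL dualC -/d divfK // subrr => /(_ erefl).
  rewrite dualC dualL => /eqP; rewrite subr_eq0 => /eqP ->; ring.
have Ev' : v' = (dual f v' / d) *: v.
  apply/rowP => j; rewrite mxE.
  have := step2 (delta_mx 0 j - (v 0 j / d) *: f).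
  rewrite dualL -/d divfK // subrr => /(_ erefl).
  rewrite dualL => /eqP; rewrite subr_eq0 => /eqP ->; ring.
have cnz : dual v f' / d != 0.
  by apply/eqP => c0; move: fnz'; rewrite Ef' c0 scale0r eqxx.
have cnz' : dual f v' / d != 0.
  by apply/eqP => c0; move: vnz'; rewrite Ev' c0 scale0r eqxx.
move: cnz cnz' Ef' Ev'; set c := dual v f' / d; set c' := dual f v' / d.
move=> cnz cnz' Ef' Ev'.
symmetry; apply: (@key_scale u u' (c * c')); first by rewrite mulf_neq0.
rewrite Eu' Eu Ev' Ef' !tensE.
have -> : (c' *: v)^T = c' *: v^T by rewrite linearZ.
by rewrite -scalemxAr -scalemxAl scalerA mulrC.
Qed.


Lemma nz_row m k (C : 'M[F]_(m, k)) : C != 0 -> exists i, row i C != 0.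
Proof.
move=> /eqP nz; case: (pickP (fun i => row i C != 0)) => [i Hi|H]; first by exists i.
exfalso; apply: nz; apply/row_matrixP => i; rewrite row0.
by move/negbT: (H i); rewrite negbK => /eqP.
Qed.

Lemma nz_col m k (C : 'M[F]_(m, k)) : C != 0 -> exists j, col j C != 0.
Proof.
move=> /eqP nz; case: (pickP (fun j => col j C != 0)) => [j Hj|H]; first by exists j.
exfalso; apply: nz; apply/matrixP => a b.
by move/negbT: (H b); rewrite negbK => /eqP/matrixP/(_ a 0); rewrite !mxE.
Qed.

Lemma key_surj (h : H_vert F n) : exists u : T, key u = h.
Proof.
case: h => [[x X] Hp]; case/and3P: (Hp) => /= /andP [rx gx] /andP [rX gX] nxX.
have xnz : x != 0 by rewrite -mxrank_eq0 (eqP rx).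
have [i ri] := nz_row xnz.
set v := row i x.
have Cnz : cokermx X != 0 by rewrite -mxrank_eq0 mxrank_coker (eqP rX) subSnn.
have [j cj] := nz_col Cnz.
set f := (col j (cokermx X))^T.
have XfT : X *m f^T = 0 by rewrite trmxK colE mulmxA mulmx_coker mul0mx.
have rf : \rank f^T = 1%N.
  apply/eqP; rewrite eqn_leq rank_leq_col /= lt0n mxrank_eq0 trmxK //.
have rv : \rank v = 1%N.
  apply/eqP; rewrite eqn_leq rank_leq_row /= lt0n mxrank_eq0 //.
have Evx : (v == x)%MS.
  by rewrite -(mxrank_leqif_eq (row_sub i x)).2 rv (eqP rx).
have EK : (X == kermx f^T)%MS.
  have sK : (X <= kermx f^T)%MS by rewrite sub_kermx XfT.
  by rewrite -(mxrank_leqif_eq sK).2 mxrank_ker rf (eqP rX) subn1.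
have dnz : dual f v != 0.
  apply/negP => /eqP d0.
  have : (v <= kermx f^T)%MS by rewrite sub_kermx dual_mx -dualC d0 raddf0 //.
  rewrite -(eqmxP EK) => vX; move: nxX; rewrite (submx_trans _ vX) //.
  by rewrite (eqmxP Evx).
exists (exist _ (tens v f) (ex_intro _ v (ex_intro _ f (conj erefl dnz)))).
apply: val_inj => /=; congr pair.
- have E1 : ((tens v f)^T == x)%MS.
    rewrite -(mxrank_leqif_eq _).2 ?rank_tens ?(eqP rx) //.
    rewrite tensE trmx_mul !trmxK; apply: (submx_trans (submxMl _ v)); exact: row_sub.
  by rewrite /kpt (eq_genmx (eqmxP E1)) (eqP gx).
- have E2 : (X == kermx (tens v f)^T)%MS.
    rewrite -(mxrank_leqif_eq _).2 ?mxrank_ker ?rank_tens ?(eqP rX) ?subn1 //.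
    by rewrite sub_kermx tensE trmx_mul [(v^T)^T]trmxK mulmxA XfT mul0mx.
  by rewrite /khp -(eq_genmx (eqmxP E2)) (eqP gX).
Qed.

End Main.

Theorem lemma3p1 (F : fieldType) (n : nat) (hn : (2 <= n)%N) :
  graph_iso (@reduct_adj (Ht_vert F n) (@Ht_adj F n)) (@H_adj F n).
Proof.
set adj := @Ht_adj F n.
have rep : forall C : reduct_vert adj, {u : Ht_vert F n | sval C = same_nbhd adj u}.
  by move=> C; apply: constructive_indefinite_description; exact: (svalP C).
pose Phi C := key (sval (rep C)).
have sn_refl : forall u, same_nbhd adj u u by move=> u w.
have key_sn : forall u u', key u = key u' -> same_nbhd adj u u'.
  move=> u u' E w; split.
  - by move/adj_key; rewrite E => /adj_key.
  - by move/adj_key; rewrite -E => /adj_key.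
have sn_eq : forall u u', key u = key u' -> same_nbhd adj u = same_nbhd adj u'.
  move=> u u' E; apply: functional_extensionality => w.
  apply: propositional_extensionality.
  have K := key_sn u u' E.
  by split=> H z; move: (K z) (H z); tauto.
have PhiE : forall C u, sval C = same_nbhd adj u -> Phi C = key u.
  move=> C u E; rewrite /Phi; case: (rep C) => u0 E0 /=; apply: same_key.
  by rewrite -E0 E; apply: sn_refl.
have Phi_inj : forall C D, Phi C = Phi D -> C = D.
  move=> C D; case: (svalP C) => u Eu; case: (svalP D) => u' Eu'.
  rewrite (PhiE C u Eu) (PhiE D u' Eu') => E.
  case: C Eu {PhiE} => c pc /= Eu; case: D Eu' => d pd /= Eu'.
  apply: subset_eq_compat; by rewrite Eu Eu' (sn_eq u u' E).
have ginv : forall h, {C | Phi C = h}.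
  move=> h; apply: constructive_indefinite_description.
  have [u Eu] := key_surj h.
  exists (exist _ (same_nbhd adj u) (ex_intro _ u erefl)).
  by rewrite (PhiE (exist _ (same_nbhd adj u) (ex_intro _ u erefl)) u erefl).
exists Phi; split.
  exists (fun h => sval (ginv h)).
  - by move=> C; apply: Phi_inj; rewrite (svalP (ginv (Phi C))).
  - by move=> h; rewrite (svalP (ginv h)).
move=> C D; case: (svalP C) => u Eu; case: (svalP D) => u' Eu'.
rewrite (PhiE _ _ Eu) (PhiE _ _ Eu'); split.
- case=> a [b [Ca [Db Hab]]].
  move: Ca Db; rewrite Eu Eu' => /same_key -> /same_key ->.
  exact/adj_key.
- move=> H; exists u, u'; rewrite Eu Eu'; split; first exact: sn_refl.
  by split; [exact: sn_refl | exact/adj_key].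
Qed.
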